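(* (i) If $\theta\in\mathbb{K}_2$ and $\theta\cdot\zeta_l\neq0$ for some $l\in\Gamma_i^{r_1}$, then $\alpha_\theta>\alpha_i$, where $\alpha_\theta=\max_{j:\theta_j>0}\alpha_j$. (ii) For every $\theta\in\mathbb{K}_2$ with $\Gamma_\theta^+\cup\Gamma_\theta^-\ne\emptyset$, $\gamma_\theta:=\alpha_\theta-\max_{k\in\Gamma_\theta^+\cup\Gamma_\theta^-}\rho_k>r_1$. Consequently $r_2:=\min\{\gamma_\theta:\theta\in\mathbb{K}_2,\ \Gamma_\theta^+\cup\Gamma_\theta^-\neq\emptyset\}$ (when this set is nonempty) satisfies $r_2>r_1$.
   Context: Fix integers $s_0,r_0\ge1$, vectors $\nu_k,\nu'_k\in\mathbb{N}^{s_0}$ ($k=1,\dots,r_0$), $\zeta_k=\nu'_k-\nu_k$, $\alpha\in[0,\infty)^{s_0}$, $\beta\in\mathbb{R}^{r_0}$, $\rho_k=\beta_k+\nu_k\cdot\alpha$. For $\theta\in[0,\infty)^{s_0}$, $\Gamma_\theta^+=\{k:\theta\cdot\zeta_k>0\}$, $\Gamma_\theta^-=\{k:\theta\cdot\zeta_k<0\}$. Let $r_1=\min_i(\alpha_i-\max_{k:\zeta_{ik}\ne0}\rho_k)$ (assumed finite; a maximum over the empty set is $-\infty$) and $\Gamma_i^{r_1}=\{k:r_1+\rho_k=\alpha_i\}$. Let $S_1=\{i:\Gamma_i^{r_1}\ne\emptyset\}$, $\Pi_1$ the coordinate projection onto $\mathrm{span}\{e_i:i\in S_1\}$ ($(\Pi_1x)_i=x_i$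 for $i\in S_1$, $0$ otherwise), and $\mathbb{K}_2=\{\theta\in[0,\infty)^{s_0}:\theta\cdot\Pi_1\zeta_k=0\ \forall k\in\bigcup_i\Gamma_i^{r_1}\}$. *)

(* Defs.v *)
From HB Require Import structures.
From mathcomp Require Import all_boot all_order all_algebra.
Set Implicit Arguments. Unset Strict Implicit. Unset Printing Implicit Defensive.
Import Order.TTheory GRing.Theory Num.Theory.
Local Open Scope ring_scope.

Section Defs.
Variable R : realFieldType.

(* max / min over a finite (possibly empty) index set; None encodes the
   value of an empty max (-oo) resp. empty min (+oo). *)
Definition omax (x y : option R) : option R :=
  match x, y with
  | None, _ => y
  | _, None => x
  | Some a, Some b => Some (Num.max a b)
  end.
Definition omin (x y : option R) : option R :=
  match x, y with
  | None, _ => y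
  | _, None => x
  | Some a, Some b => Some (Num.min a b)
  end.
Definition maxo (I : finType) (P : pred I) (F : I -> R) : option R :=
  \big[omax/None]_(k | P k) Some (F k).
Definition mino (I : finType) (P : pred I) (F : I -> R) : option R :=
  \big[omin/None]_(k | P k) Some (F k).

Variables (s0 r0 : nat).
Variables (nu nu' : 'I_r0 -> 'I_s0 -> nat).
Variables (alpha : 'I_s0 -> R) (beta : 'I_r0 -> R).

Definition zeta (k : 'I_r0) (i : 'I_s0) : int := (nu' k i)%:Z - (nu k i)%:Z.

Definition dotz (theta : 'I_s0 -> R) (x : 'I_s0 -> int) : R :=
  \sum_(i < s0) theta i * (x i)%:~R.

Definition rho (k : 'I_r0) : R := beta k + \sum_(i < s0) (nu k i)%:R * alpha i.

Definition Gamma_plus (theta : 'I_s0 -> R) : pred 'I_r0 :=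
  fun k => 0 < dotz theta (zeta k).
Definition Gamma_minus (theta : 'I_s0 -> R) : pred 'I_r0 :=
  fun k => dotz theta (zeta k) < 0.

(* r1 = min_i (alpha_i - max_{k : zeta_ik <> 0} rho_k); a term with an empty
   max is +oo (None) and does not contribute; r1opt = None iff r1 = +oo. *)
Definition r1opt : option R :=
  mino [pred i | maxo (fun k => zeta k i != 0) rho != None]
       (fun i => alpha i - odflt 0 (maxo (fun k => zeta k i != 0) rho)).

Variable r1 : R.

Definition Gamma_r1 (i : 'I_s0) : pred 'I_r0 := fun k => r1 + rho k == alpha i.

Definition S1 : pred 'I_s0 := fun i => [exists k, Gamma_r1 i k].

Definition Pi1 (x : 'I_s0 -> int) : 'I_s0 -> int := fun i => if S1 i then x i else 0.

Definition K2 (theta : 'I_s0 -> R) : Prop :=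
  (forall i, 0 <= theta i) /\
  (forall k, (exists i, Gamma_r1 i k) -> dotz theta (Pi1 (zeta k)) = 0).

Definition alpha_theta (theta : 'I_s0 -> R) : option R :=
  maxo (fun j => 0 < theta j) alpha.

Definition gamma_theta (theta : 'I_s0 -> R) : option R :=
  match alpha_theta theta,
        maxo (fun k => Gamma_plus theta k || Gamma_minus theta k) rho with
  | Some a, Some m => Some (a - m)
  | _, _ => None
  end.

End Defs.

(* Main.v *)
Require Import Defs.
From HB Require Import structures.
From mathcomp Require Import all_boot all_order all_algebra.
From Stdlib Require Import ClassicalEpsilon.
Set Implicit Arguments. Unset Strict Implicit. Unset Printing Implicit Defensive.
Import Order.TTheory GRing.Theory Num.Theory.
Local Open Scope ring_scope.

Section Aux.
Variable R : realFieldType.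
Variable I : finType.

Lemma maxo_ex (P : pred I) (F : I -> R) k :
  P k -> exists m, maxo P F = Some m /\ F k <= m.
Proof.
rewrite /maxo => Pk.
have : k \in index_enum I by rewrite /index_enum -enumT mem_enum.
elim: (index_enum I) => [|a r IH] //.
rewrite inE big_cons => /orP [/eqP <-|kr].
- rewrite Pk; case: (\big[_/_]_(i <- r | _) _) => [b|] /=.
    by eexists; split; first reflexivity; rewrite le_max lexx.
  by eexists; split; first reflexivity.
- case: (P a); last exact: IH.
  case: (IH kr) => b [-> h] /=; eexists; split; first reflexivity.
  by rewrite le_max h orbT.
Qed.

Lemma maxo_ge (P : pred I) (F : I -> R) m k :
  maxo P F = Some m -> P k -> F k <= m.
Proof. by move=> H /(maxo_ex F) [b []]; rewrite H => -[->]. Qed.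

Lemma maxo_att (P : pred I) (F : I -> R) m :
  maxo P F = Some m -> exists k, P k /\ F k = m.
Proof.
rewrite /maxo; move: m.
apply: (big_ind (fun o => forall m, o = Some m -> exists k, P k /\ F k = m)) => //.
- move=> [a|] [b|] Ha Hb m /=; try (by apply: Ha); try (by apply: Hb); try by [].
  move=> [<-]; rewrite /Num.max; case: ifP => _; [exact: Hb|exact: Ha].
- by move=> i Pi m [<-]; exists i.
Qed.

Lemma mino_ex (P : pred I) (F : I -> R) k :
  P k -> exists m, mino P F = Some m /\ m <= F k.
Proof.
rewrite /mino => Pk.
have : k \in index_enum I by rewrite /index_enum -enumT mem_enum.
elim: (index_enum I) => [|a r IH] //.
rewrite inE big_cons => /orP [/eqP <-|kr].
- rewrite Pk; case: (\big[_/_]_(i <- r | _) _) => [b|] /=.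
    by eexists; split; first reflexivity; rewrite ge_min lexx.
  by eexists; split; first reflexivity.
- case: (P a); last exact: IH.
  case: (IH kr) => b [-> h] /=; eexists; split; first reflexivity.
  by rewrite ge_min h orbT.
Qed.

Lemma mino_le (P : pred I) (F : I -> R) m k :
  mino P F = Some m -> P k -> m <= F k.
Proof. by move=> H /(mino_ex F) [b []]; rewrite H => -[->]. Qed.

Lemma fin_min (P : I -> Prop) (f : I -> R) :
  (exists x, P x) -> exists x, P x /\ forall y, P y -> f x <= f y.
Proof.
move=> [x0 Px0].
pose Pb y := if excluded_middle_informative (P y) then true else false.
have PbP y : reflect (P y) (Pb y).
  by rewrite /Pb; case: excluded_middle_informative => h; constructor.
have gen : forall s : seq I, forall x0, x0 \in s ->
    exists2 x, x \in s & forall y, y \in s -> f x <= f y.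
  elim=> [|a s IH] x1 //.
  case: s IH => [|b s] IH.
    move=> _; exists a; first by rewrite mem_head.
    by move=> y; rewrite inE => /eqP ->.
  move=> _; have [x' xs' Hx'] := IH b (mem_head _ _).
  case/orP: (le_total (f a) (f x')) => h.
  - exists a; first by rewrite mem_head.
    move=> y; rewrite inE => /orP [/eqP ->//|/Hx' h']; exact: le_trans h h'.
  - exists x'; first by rewrite inE xs' orbT.
    move=> y; rewrite inE => /orP [/eqP ->//|/Hx'//].
have := gen [seq y <- enum I | Pb y] x0.
rewrite mem_filter mem_enum andbT.
case/(_ (introT (PbP x0) Px0)) => x; rewrite mem_filter mem_enum andbT => /PbP Px Hx.
exists x; split => // y /PbP Py; apply: Hx; by rewrite mem_filter mem_enum Py.
Qed.
End Aux.

Section Main.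
Variable R : realFieldType.
Variables (s0 r0 : nat) (nu nu' : 'I_r0 -> 'I_s0 -> nat) (alpha : 'I_s0 -> R) (beta : 'I_r0 -> R) (r1 : R).
Hypothesis Hr1 : r1opt nu nu' alpha beta = Some r1.

Lemma r1_le k i : zeta nu nu' k i != 0 -> r1 + rho nu alpha beta k <= alpha i.
Proof.
move=> nz.
have [m [Hm le]] := @maxo_ex R _ (fun k => zeta nu nu' k i != 0) (rho nu alpha beta) k nz.
have := mino_le (k := i) Hr1; rewrite /= Hm /= => /(_ isT).
by rewrite lerBrDr => h; apply: le_trans h; apply: lerD.
Qed.

Lemma dot_nz (theta : 'I_s0 -> R) x : dotz theta x != 0 ->
  exists j, 0 != theta j /\ x j != 0.
Proof.
case: (boolP [exists j, theta j * (x j)%:~R != 0]).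
  case/existsP => j; rewrite mulf_eq0 negb_or intr_eq0 => /andP[a b].
  by exists j; rewrite eq_sym a b.
rewrite negb_exists => /forallP H; rewrite /dotz big1 ?eqxx // => j _.
by apply/eqP; move: (H j); rewrite negbK.
Qed.

Lemma core theta k : K2 nu nu' alpha beta r1 theta ->
  dotz theta (zeta nu nu' k) != 0 ->
  exists j, 0 < theta j /\ r1 + rho nu alpha beta k < alpha j.
Proof.
move=> [pos HK] nz.
case: (boolP [exists i, Gamma_r1 nu alpha beta r1 i k]) => [/existsP [i Gi]|nG].
- have H0 := HK k (ex_intro _ i Gi).
  case: (boolP [exists j, ~~ S1 nu alpha beta r1 j && (theta j * (zeta nu nu' k j)%:~R != 0)]).
  + case/existsP => j /andP [nS]; rewrite mulf_eq0 negb_or intr_eq0 => /andP[a b].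
    exists j; split; first by rewrite lt_def a pos.
    rewrite lt_def r1_le // andbT eq_sym.
    move: nS; rewrite /S1 negb_exists => /forallP /(_ k) //.
  + rewrite negb_exists => /forallP H; exfalso; move/eqP: nz; apply.
    rewrite -H0 /dotz; apply: eq_bigr => j _; rewrite /Pi1.
    case: (boolP (S1 nu alpha beta r1 j)) => // nS.
    by move: (H j); rewrite nS /= negbK => /eqP ->; rewrite mulr0.
- have [j [a b]] := dot_nz nz.
  exists j; split; first by rewrite lt_def eq_sym a pos.
  rewrite lt_def r1_le // andbT eq_sym.
  by move: nG; rewrite negb_exists => /forallP /(_ j).
Qed.
End Main.
Theorem lemma4p4 (R : realFieldType) (s0 r0 : nat)
  (nu nu' : 'I_r0 -> 'I_s0 -> nat) (alpha : 'I_s0 -> R) (beta : 'I_r0 -> R)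
  (r1 : R)
  (Hs0 : (1 <= s0)%N) (Hr0 : (1 <= r0)%N)
  (Halpha : forall i, 0 <= alpha i)
  (Hr1 : r1opt nu nu' alpha beta = Some r1) :
  (* (i) *)
  (forall (theta : 'I_s0 -> R) (i : 'I_s0) (l : 'I_r0),
     K2 nu nu' alpha beta r1 theta ->
     Gamma_r1 nu alpha beta r1 i l ->
     dotz theta (zeta nu nu' l) != 0 ->
     exists a, alpha_theta alpha theta = Some a /\ alpha i < a) /\
  (* (ii) *)
  (forall theta : 'I_s0 -> R,
     K2 nu nu' alpha beta r1 theta ->
     (exists k, Gamma_plus nu nu' theta k || Gamma_minus nu nu' theta k) ->
     exists g, gamma_theta nu nu' alpha beta theta = Some g /\ r1 < g) /\
  ((exists theta : 'I_s0 -> R, K2 nu nu' alpha beta r1 theta /\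
      exists k, Gamma_plus nu nu' theta k || Gamma_minus nu nu' theta k) ->
   exists r2 : R,
     (exists theta : 'I_s0 -> R, K2 nu nu' alpha beta r1 theta /\
        (exists k, Gamma_plus nu nu' theta k || Gamma_minus nu nu' theta k) /\
        gamma_theta nu nu' alpha beta theta = Some r2) /\
     (forall theta : 'I_s0 -> R, K2 nu nu' alpha beta r1 theta ->
        (exists k, Gamma_plus nu nu' theta k || Gamma_minus nu nu' theta k) ->
        forall g, gamma_theta nu nu' alpha beta theta = Some g -> r2 <= g) /\
     r1 < r2).
Proof.
have GP : forall theta k, (Gamma_plus nu nu' theta k || Gamma_minus nu nu' theta k) =
    (dotz theta (zeta nu nu' k) != 0).
  by move=> ? ? ; rewrite /Gamma_plus /Gamma_minus /= ?neq_lt ?orbC /= => *; rewrite neq_lt orbC.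
have partii : forall theta : 'I_s0 -> R,
     K2 nu nu' alpha beta r1 theta ->
     (exists k, Gamma_plus nu nu' theta k || Gamma_minus nu nu' theta k) ->
     exists g, gamma_theta nu nu' alpha beta theta = Some g /\ r1 < g.
  move=> theta HK [k0 Hk0].
  have [m [Hm _]] := @maxo_ex R _ (fun k => Gamma_plus nu nu' theta k || Gamma_minus nu nu' theta k) (rho nu alpha beta) k0 Hk0.
  have [k [Pk Ek]] := maxo_att Hm; subst m.
  rewrite GP in Pk.
  have [j [tj lt]] := core Hr1 HK Pk.
  have [a [Ha le]] := @maxo_ex R _ (fun j => 0 < theta j) alpha j tj.
  exists (a - rho nu alpha beta k); rewrite /gamma_theta /alpha_theta Ha Hm; split => //.
  by rewrite ltrBrDr; apply: lt_le_trans lt le.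
split.
  move=> theta i l HK Gl nz.
  have [j [tj lt]] := core Hr1 HK nz.
  have [a [Ha le]] := @maxo_ex R _ (fun j => 0 < theta j) alpha j tj.
  exists a; split => //; move/eqP: Gl => <-; exact: lt_le_trans lt le.
split => // Hex.
pose P (p : 'I_s0 * 'I_r0) := exists theta : 'I_s0 -> R, K2 nu nu' alpha beta r1 theta /\
        (exists k, Gamma_plus nu nu' theta k || Gamma_minus nu nu' theta k) /\
        gamma_theta nu nu' alpha beta theta = Some (alpha p.1 - rho nu alpha beta p.2).
have decomp : forall theta g, gamma_theta nu nu' alpha beta theta = Some g ->
    exists p : 'I_s0 * 'I_r0, g = alpha p.1 - rho nu alpha beta p.2.
  move=> theta g; rewrite /gamma_theta.
  case Ea: (alpha_theta alpha theta) => [a|] //.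
  case Em: (maxo _ _) => [m|] // [<-].
  have [j [_ <-]] := maxo_att Ea; have [k [_ <-]] := maxo_att Em.
  by exists (j, k).
have exP : exists p, P p.
  case: Hex => theta [HK Hk]; have [g [Hg _]] := partii theta HK Hk.
  have [p Hp] := decomp _ _ Hg; exists p, theta; rewrite -Hp; by [].
have [p [Pp Hmin]] := fin_min (fun p => alpha p.1 - rho nu alpha beta p.2) exP.
exists (alpha p.1 - rho nu alpha beta p.2); split => //; split.
  move=> theta HK Hk g Hg; have [q Hq] := decomp _ _ Hg; rewrite Hq; apply: Hmin.
  by exists theta; rewrite -Hq.
case: Pp => theta [HK [Hk Hg]]; have [g [Hg' lt]] := partii theta HK Hk.
by move: Hg'; rewrite Hg => -[->].
Qed.
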